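(* Let $\ell\ge1$ and consider the saturation model with $s=\ell$, i.e. thresholds $\underline{\eta}=(1,2,\dots,\ell)$, so the outcome of $y$ is $\min(y,\ell)$. For $j\ge1$ let $c_j=\frac{(\ell+1)^j-1}{\ell}$ (an integer), and let $p(c)$ be the word defined (for these thresholds) by $$p(c)=o(0)^{c}\,0\,o(1)^{c}\,0\,o(2)^{c}\cdots0\,o(\ell)^{c}\;1\,u(\ell)^{c}\;1\,u(\ell-1)^{c}\;1\,u(\ell-2)^{c}\cdots1\,u(0)^{c}\;0,$$ where $o(x)=0^{\ell-x}1^x$, $u(x)=1^x0^{\ell-x}$ and $w^c$ is the concatenation of $c$ copies of $w$. Define matrices recursively by $R_1=p(c_1)$ (a single row of length $2(\ell+1)^2$) and, for $i\ge2$, $R_i=\begin{bmatrix}p(c_i)\\ R_{i-1}R_{i-1}\cdots R_{i-1}\end{bmatrix}$, where the bottom block is the horizontal concatenation of $\ell+1$ copies of $R_{i-1}$ (so $R_i$ has $i$ rows and $2(\ell+1)^{i+1}$ columns). Let $R_i^{\infty}$ be the infinite horizontal periodic repetition of $R_i$, with columns indexed by $t\ge0$. Then for every $i\ge1$, every row index $r\in\{1,\dots,i\}$ (counted from the top) and every $t\ge0$, $$\min\Big(\sum_{u=t}^{t+\ell-1}R_i^{\infty}(r,u),\;\ell\Big)=g\Big(\big\lfloor t/(\ell+1)^{\,i+1-r}\big\rfloor \bmod 2(\ell+1)\Big),$$ where $g:\{0,\dots,2\ell+1\}\to\{0,\dots,\ell\}$ is given by $g(k)=k$ for $k\le\ell$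 and $g(k)=2\ell+1-k$ for $k\ge\ell+1$. Equivalently, the outcome matrix of $R_i^\infty$ over all length-$\ell$ bursts is the periodic repetition of $P_i\otimes\mathbf{1}^{\ell+1}$, where $P_1=(g(0),\dots,g(2\ell+1))$ and $P_i=\begin{bmatrix}(g(0),\dots,g(2\ell+1))\otimes\mathbf{1}^{(\ell+1)^{i-1}}\\ P_{i-1}\cdots P_{i-1}\end{bmatrix}$ ($\ell+1$ copies of $P_{i-1}$).
   Context: The sum $\sum_{u=t}^{t+\ell-1}R_i^\infty(r,u)$ is the number of ones the $r$-th test row has in common with the length-$\ell$ burst whose ones occupy positions $t,\dots,t+\ell-1$. $\mathbf{1}^m$ denotes the all-ones row of length $m$ and $\otimes$ the Kronecker product. *)

(* Defs.v *)
From mathcomp Require Import all_boot.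
Set Implicit Arguments. Unset Strict Implicit. Unset Printing Implicit Defensive.

Definition wpow (w : seq nat) (c : nat) : seq nat := flatten (nseq c w).

Definition oword (l x : nat) : seq nat := nseq (l - x) 0 ++ nseq x 1.
Definition uword (l x : nat) : seq nat := nseq x 1 ++ nseq (l - x) 0.

(* p(c) = o(0)^c 0 o(1)^c 0 ... 0 o(l)^c 1 u(l)^c 1 u(l-1)^c ... 1 u(0)^c 0 *)
Definition pword (l c : nat) : seq nat :=
  flatten [seq (if x == 0 then [::] else [:: 0]) ++ wpow (oword l x) c
          | x <- iota 0 l.+1]
  ++ flatten [seq 1 :: wpow (uword l (l - x)) c | x <- iota 0 l.+1]
  ++ [:: 0].

Definition cc (l j : nat) : nat := ((l.+1) ^ j - 1) %/ l.

(* Rmat l i = R_i as the list of its rows (top row first), for i >= 1;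
   R_1 = p(c_1), R_i = [p(c_i) ; R_{i-1} ... R_{i-1} (l+1 copies)]. *)
Fixpoint Rmat (l i : nat) : seq (seq nat) :=
  match i with
  | 0 => [::]
  | 1 => [:: pword l (cc l 1)]
  | i'.+1 => pword l (cc l i) :: [seq flatten (nseq l.+1 row) | row <- Rmat l i']
  end.

(* R_i^infty(r,u), rows r counted from 1 at the top, columns u >= 0 *)
Definition Rinf (l i r u : nat) : nat :=
  let row := nth [::] (Rmat l i) r.-1 in nth 0 row (u %% size row).

Definition gfun (l k : nat) : nat := if k <= l then k else (2 * l).+1 - k.

(* Main.v *)
Require Import Defs.
From mathcomp Require Import all_boot zify.

Lemma nth_flatten_blocks (U : eqType) (f : U -> seq nat) (s : seq U) (N : nat) (x0 : U) q :
  (forall x, x \in s -> size (f x) = N) -> q < size s * N ->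
  nth 0 (flatten (map f s)) q = nth 0 (f (nth x0 s (q %/ N))) (q %% N).
Proof.
elim: s q => [|y s IH] q Hs Hq /=; first by rewrite mul0n in Hq.
have Hy : size (f y) = N by apply: Hs; rewrite mem_head.
have N0 : 0 < N by move: Hq; case: (N) => //; rewrite muln0.
rewrite nth_cat Hy; case: ltnP => HqN.
  by rewrite divn_small // modn_small.
have E : q = 1 * N + (q - N) by lia.
rewrite [in RHS]E divnMDl // modnMDl add1n /= IH //.
  by move=> x xs; apply: Hs; rewrite inE xs orbT.
by move: Hq; rewrite /= mulSn; lia.
Qed.

Lemma size_flatten_blocks (U : eqType) (f : U -> seq nat) (s : seq U) (N : nat) :
  (forall x, x \in s -> size (f x) = N) -> size (flatten (map f s)) = size s * N.
Proof.
elim: s => [|y s IH] Hs //=.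
rewrite size_cat Hs ?mem_head // IH ?mulSn //.
by move=> x xs; apply: Hs; rewrite inE xs orbT.
Qed.

Lemma flatten_nseq_map (T : Type) n (s : seq T) : flatten (nseq n s) = flatten (map id (nseq n s)).
Proof. by rewrite map_id. Qed.

Lemma nth_flatten_nseq n (w : seq nat) p : p < n * size w ->
  nth 0 (flatten (nseq n w)) p = nth 0 w (p %% size w).
Proof.
move=> Hp; rewrite flatten_nseq_map (@nth_flatten_blocks _ id (nseq n w) (size w) w).
- by rewrite nth_nseq; case: ifP.
- by move=> x /nseqP [->].
- by rewrite size_nseq.
Qed.

Lemma size_flatten_nseq n (w : seq nat) : size (flatten (nseq n w)) = n * size w.
Proof.
rewrite flatten_nseq_map (@size_flatten_blocks _ id _ (size w)) ?size_nseq //.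
by move=> x /nseqP [->].
Qed.

Lemma flatten_nseq_mul (T : Type) a b (s : seq T) :
  flatten (nseq a (flatten (nseq b s))) = flatten (nseq (a * b) s).
Proof.
elim: a => [|a IH] //=. by rewrite mulSn nseqD flatten_cat IH.
Qed.

Lemma Rmat_S l i : 0 < i ->
  Rmat l i.+1 = pword l (cc l i.+1) :: map (fun row => flatten (nseq l.+1 row)) (Rmat l i).
Proof. by case: i. Qed.

Lemma size_Rmat l k : size (Rmat l k) = k.
Proof. elim: k => [|[|k] IHk] //. by rewrite Rmat_S // /= size_map IHk. Qed.

Lemma Rmat_row l i r : 1 <= r <= i ->
  nth [::] (Rmat l i) r.-1 = flatten (nseq (l.+1 ^ r.-1) (pword l (cc l (i.+1 - r)))).
Proof.
elim: i r => [|i IH] r /andP [r1 ri]; first lia.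
case: i IH ri => [|i] IH ri.
  have -> : r = 1 by lia.
  by rewrite /= cats0.
case: r r1 ri => [|r] // _ ri.
rewrite Rmat_S //.
case: r ri => [|r] ri.
  by rewrite /= subSS subn0 cats0.
set M := Rmat l i.+1.
rewrite [nth _ (_ :: _) _]/= (nth_map [::]); last by rewrite /M size_Rmat; lia.
rewrite /M (IH r.+1); last lia.
by rewrite flatten_nseq_mul expnS mulSn nseqD flatten_cat !subSS.
Qed.

Lemma cc_spec l j : 0 < l -> l * cc l j + 1 = l.+1 ^ j.
Proof.
move=> l0.
have [c Hc] : exists c, l.+1 ^ j = l * c + 1.
  elim: j => [|j [c Hc]]; first by exists 0; rewrite muln0.
  exists (c * l.+1 + 1); rewrite expnS Hc; lia.
by rewrite /cc Hc addnK mulKn.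
Qed.

Lemma cc_pos l j : 0 < l -> 0 < j -> 0 < cc l j.
Proof.
move=> l0 j0; have := @cc_spec l j l0.
case: (cc l j) => // H; rewrite muln0 add0n in H.
have : l.+1 ^ 1 <= l.+1 ^ j by rewrite leq_exp2l.
rewrite -H; lia.
Qed.

Definition Fkj (l k j : nat) : nat :=
  if j == 0 then (if (l < k) && (k <= (2 * l).+1) then 1 else 0)
  else if k <= l then (if l - k <= (j.-1) %% l then 1 else 0)
  else if k <= (2 * l).+1 then (if (j.-1) %% l < (2 * l).+1 - k then 1 else 0)
  else 0.

Lemma size_wpow v c : size (wpow v c) = c * size v.
Proof. exact: size_flatten_nseq. Qed.

Lemma nth_block b v c j : 0 < size v -> j < (c * size v).+1 ->
  nth 0 (b :: wpow v c) j = if j == 0 then b else nth 0 v ((j.-1) %% size v).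
Proof.
move=> v0; case: j => [|j] //= Hj.
by rewrite /wpow nth_flatten_nseq.
Qed.

Lemma nth_oword l x a : x <= l -> a < l ->
  nth 0 (oword l x) a = if l - x <= a then 1 else 0.
Proof.
move=> xl al; rewrite /oword nth_cat size_nseq.
case: ltnP => H; first by rewrite nth_nseq H.
by rewrite nth_nseq; case: ifP => //; lia.
Qed.

Lemma nth_uword l y a : y <= l -> a < l ->
  nth 0 (uword l y) a = if a < y then 1 else 0.
Proof.
move=> yl al; rewrite /uword nth_cat size_nseq.
case: ltnP => H; first by rewrite nth_nseq H.
by rewrite nth_nseq; case: ifP => //; lia.
Qed.

Lemma size_oword l x : x <= l -> size (oword l x) = l.
Proof. by move=> ?; rewrite size_cat !size_nseq subnK. Qed.
Lemma size_uword l x : x <= l -> size (uword l x) = l.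
Proof. by move=> ?; rewrite size_cat !size_nseq subnKC. Qed.

Lemma pword0 l c : 0 < c ->
  0 :: pword l c = flatten [seq 0 :: wpow (oword l x) c | x <- iota 0 l.+1] ++
    (flatten [seq 1 :: wpow (uword l (l - x)) c | x <- iota 0 l.+1] ++ [:: 0]).
Proof.
move=> c0; rewrite /pword /=; congr (_ :: _ ++ _).
congr (_ ++ _); apply: congr1; apply/eq_in_map => x; rewrite mem_iota => /andP [x1 _].
by case: x x1.
Qed.

Lemma nth_pword l c q : 0 < l -> 0 < c -> q <= 2 * l.+1 * (l * c).+1 ->
  nth 0 (0 :: pword l c) q = Fkj l (q %/ (l * c).+1) (q %% (l * c).+1).
Proof.
move=> l0 c0 Hq.
have [N EN] : exists N, N = (l * c).+1 by eexists.
rewrite -EN; rewrite -EN in Hq.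
have N0 : 0 < N by rewrite EN.
have lN : l < N by rewrite EN ltnS leq_pmulr.
have szo : forall x, x \in iota 0 l.+1 -> size (0 :: wpow (oword l x) c) = N.
  move=> x; rewrite mem_iota => /andP [_ xl].
  rewrite /= size_wpow size_oword; last by rewrite ltnS in xl.
  by rewrite EN mulnC.
have szu : forall x, x \in iota 0 l.+1 -> size (1 :: wpow (uword l (l - x)) c) = N.
  move=> x; rewrite mem_iota => /andP [_ xl].
  rewrite /= size_wpow size_uword; last by rewrite leq_subr.
  by rewrite EN mulnC.
have bsz : forall x, x <= l -> N = (c * size (oword l x)).+1.
  by move=> x xl; rewrite size_oword // EN mulnC.
have bszu : forall x, x <= l -> N = (c * size (uword l x)).+1.
  by move=> x xl; rewrite size_uword // EN mulnC.
clear EN.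
rewrite pword0 // nth_cat (@size_flatten_blocks _ _ _ _ szo) size_iota.
case: ltnP => H1.
  rewrite (@nth_flatten_blocks _ _ _ _ 0 _ szo) ?size_iota //.
  have kl : q %/ N < l.+1 by rewrite ltn_divLR.
  rewrite nth_iota // add0n nth_block; last first.
    by rewrite -bsz ?ltn_mod //.
    by rewrite size_oword //; lia.
  rewrite size_oword // nth_oword //; last by rewrite ltn_mod; lia.
  rewrite /Fkj; case: eqP => _.
    by case: ifP => //; lia.
  by rewrite [in RHS]ifT //; lia.
rewrite nth_cat (@size_flatten_blocks _ _ _ _ szu) size_iota.
have Eq : q = l.+1 * N + (q - l.+1 * N) by lia.
rewrite [in RHS]Eq divnMDl // modnMDl.
case: ltnP => H2.
  rewrite (@nth_flatten_blocks _ _ _ _ 0 _ szu) ?size_iota //.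
  have kl : (q - l.+1 * N) %/ N < l.+1 by rewrite ltn_divLR.
  rewrite nth_iota // add0n nth_block; last first.
    by rewrite -bszu ?ltn_mod ?leq_subr.
    by rewrite size_uword ?leq_subr //; lia.
  rewrite size_uword ?leq_subr // nth_uword ?leq_subr //; last by rewrite ltn_mod; lia.
  move: kl; set k := (q - l.+1 * N) %/ N; set j := (q - l.+1 * N) %% N => kl.
  rewrite /Fkj; case: eqP => _.
    by case: ifP => //; lia.
  rewrite [in RHS]ifF; last lia.
  rewrite [in RHS]ifT; last lia.
  by case: ifP; case: ifP => //; lia.
have E2 : q - l.+1 * N - l.+1 * N = 0 by lia.
rewrite E2 /=.
have E3 : q - l.+1 * N = l.+1 * N + 0 by move: Hq; rewrite -mulnA; lia.
rewrite E3 divnMDl // modnMDl mod0n div0n addn0 /Fkj eqxx ifF //.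
apply/negbTE; rewrite negb_and; apply/orP; right; lia.
Qed.

Lemma size_pword l c : 0 < c -> size (pword l c) = 2 * l.+1 * (l * c).+1.
Proof.
move=> c0.
have szo : forall x, x \in iota 0 l.+1 -> size (0 :: wpow (oword l x) c) = (l * c).+1.
  move=> x; rewrite mem_iota => /andP [_ xl].
  rewrite /= size_wpow size_oword; last by rewrite ltnS in xl.
  by rewrite mulnC.
have szu : forall x, x \in iota 0 l.+1 -> size (1 :: wpow (uword l (l - x)) c) = (l * c).+1.
  move=> x; rewrite mem_iota => /andP [_ xl].
  rewrite /= size_wpow size_uword; last by rewrite leq_subr.
  by rewrite mulnC.
have := congr1 size (@pword0 l c c0).
rewrite size_cat (@size_flatten_blocks _ _ _ _ szo) size_cat (@size_flatten_blocks _ _ _ _ szu).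
rewrite size_iota [size (_ :: _)]/= [size [:: 0]]/=; lia.
Qed.

Section Key.
Variables (l c : nat).
Hypotheses (l0 : 0 < l) (c0 : 0 < c).
Let N := (l * c).+1.
Let S := 2 * l.+1 * N.
Definition Fq q := Fkj l (q %/ N) (q %% N).

Lemma N0 : 0 < N. Proof. by []. Qed.

Lemma Fq_mul k j : j < N -> Fq (k * N + j) = Fkj l k j.
Proof. by move=> jN; rewrite /Fq divnMDl // modnMDl divn_small // modn_small // addn0. Qed.

Lemma modS_small x : x < S -> x %% S = x.
Proof. exact: modn_small. Qed.

Lemma modS_big x : S <= x < S + S -> x %% S = x - S.
Proof.
move=> /andP [h1 h2]; have -> : x = 1 * S + (x - S) by lia.
by rewrite modnMDl modn_small; lia.
Qed.

Lemma key tau : tau < S ->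
  Fq ((tau + l) %% S).+1 + gfun l (tau %/ N) =
  Fq tau.+1 + gfun l ((tau.+1 %% S) %/ N).
Proof.
move=> tS.
have SE : S = (2 * l).+2 * N by rewrite /S; lia.
set k := tau %/ N; set m := tau %% N.
have tE : tau = k * N + m by rewrite /k /m -divn_eq.
have mN : m < N by rewrite /m ltn_mod.
have kS : k < (2 * l).+2.
  by rewrite /k ltn_divLR // -SE.
have kN1 : k.+1 * N <= S by rewrite SE leq_mul2r kS orbT.
have lN : l < N by rewrite /N ltnS leq_pmulr.
case: (ltnP m.+1 N) => HmN.
  have t1 : tau.+1 = k * N + m.+1 by rewrite tE addnS.
  have t1S : tau.+1 < S by move: kN1; rewrite mulSn; lia.
  rewrite (@modS_small _ t1S) t1 divnMDl // divn_small // addn0.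
  rewrite Fq_mul //.
  set b := m %/ l; set a := m %% l.
  have mE : m = b * l + a by rewrite /b /a -divn_eq.
  have al : a < l by rewrite /a ltn_mod.
  have bc : b < c.
    rewrite /b ltn_divLR //; move: HmN; rewrite /N mulnC; lia.
  case: (ltnP b.+1 c) => Hbc.
    have bl2 : (b.+2) * l <= c * l by rewrite leq_mul2r Hbc orbT.
    have e1 : (tau + l).+1 = k * N + (m + l).+1 by rewrite tE; lia.
    have mlN : (m + l).+1 < N by rewrite /N mE mulnC; move: bl2; rewrite !mulSn; lia.
    have tlS : tau + l < S by move: kN1; rewrite mulSn; lia.
    rewrite (@modS_small _ tlS) e1 Fq_mul // /Fkj /=.
    by rewrite modnDr.
  have cb : c = b.+1 by lia.
  have e1 : (tau + l).+1 = k.+1 * N + a.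
    by rewrite tE mulSn mE /N cb; lia.
  case: (boolP ((k.+1 < (2 * l).+2) || (a == 0))) => Hw.
    have tlS : tau + l < S.
      case/orP: Hw => Hw.
        have : k.+2 * N <= S by rewrite SE leq_mul2r Hw orbT.
        rewrite mulSn; lia.
      move: kN1; rewrite mulSn; move/eqP: Hw; lia.
    rewrite (@modS_small _ tlS) e1 Fq_mul; last lia.
    rewrite /Fkj /= -/a.
    case: (posnP a) => [a0|ap].
      rewrite a0 /=.
      case: ifP => ?; case: ifP => ?; try case: ifP => ?; try case: ifP => ?; lia.
    rewrite (modn_small (m := a.-1)); last lia.
    case: ifP => ?; case: ifP => ?; try case: ifP => ?; try case: ifP => ?;
      try case: ifP => ?; try case: ifP => ?; lia.
  rewrite negb_or -leqNgt in Hw; case/andP: Hw => Hk Ha.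
  have kE : k = (2 * l).+1 by lia.
  have SE2 : S = k.+1 * N by rewrite SE kE.
  have tlS : S <= tau + l < S + S.
    by apply/andP; split; move: e1 lN; rewrite -SE2; lia.
  rewrite (@modS_big _ tlS).
  have e2 : (tau + l - S).+1 = 0 * N + a by move: e1; rewrite -SE2; lia.
  rewrite e2 Fq_mul; last lia.
  rewrite /Fkj /= -/a ifF; last lia.
  rewrite (modn_small (m := a.-1)); last lia.
  have -> : k = (2 * l).+1 by lia.
  rewrite leqnn ifF; last lia.
  by case: ifP => ?; [lia | rewrite subnn].
have mE : m.+1 = N by lia.
have t1 : tau.+1 = k.+1 * N + 0 by rewrite tE mulSn; lia.
case: (ltnP k.+1 (2 * l).+2) => Hk.
  have kN2 : k.+2 * N <= S by rewrite SE leq_mul2r Hk orbT.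
  have t1S : tau.+1 < S by move: kN2; rewrite mulSn; lia.
  rewrite (@modS_small _ t1S) t1 Fq_mul // divnMDl // div0n addn0.
  have tlS : tau + l < S by move: kN2; rewrite !mulSn; lia.
  have e1 : (tau + l).+1 = k.+1 * N + l by rewrite tE mulSn; lia.
  rewrite (@modS_small _ tlS) e1 Fq_mul //.
  rewrite /Fkj /gfun /= ifF; last lia.
  rewrite (modn_small (m := l.-1)); last lia.
  case: ifP => ?; case: ifP => ?; try case: ifP => ?; try case: ifP => ?;
    try case: ifP => ?; try case: ifP => ?; lia.
have kE : k = (2 * l).+1 by lia.
have t1S : tau.+1 = S by rewrite t1 SE kE; lia.
rewrite t1S modnn div0n.
have tlS : S <= tau + l < S + S by lia.
rewrite (@modS_big _ tlS).
have e2 : (tau + l - S).+1 = 0 * N + l by lia.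
rewrite e2 Fq_mul // -t1S t1 Fq_mul // kE /Fkj /gfun /=.
rewrite (modn_small (m := l.-1)); last lia.
rewrite subnn; repeat case: ifP => ?; lia.
Qed.


Lemma S0 : 0 < S. Proof. by rewrite /S !muln_gt0. Qed.

Definition P u := nth 0 (pword l c) (u %% S).
Definition G t := gfun l ((t %/ N) %% (2 * l.+1)).

Lemma P_Fq u : P u = Fq (u %% S).+1.
Proof.
rewrite /P /Fq -nth_pword //.
by rewrite /S /N; have := ltn_pmod u S0; rewrite /S /N.
Qed.

Lemma G_mod t : G t = gfun l ((t %% S) %/ N).
Proof. by rewrite /G modn_divl. Qed.

Lemma step t : P (t + l) + G t = P t + G t.+1.
Proof.
rewrite !P_Fq !G_mod -modnDml -(addn1 t) -(modnDml t 1) addn1.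
apply: key; exact: ltn_pmod S0.
Qed.

Lemma window t : \sum_(t <= u < t + l) P u = G t.
Proof.
elim: t => [|t IH].
  rewrite add0n /G div0n mod0n /gfun /= big1_seq // => u; rewrite mem_iota => /andP [_ ul].
  have NS : N <= S by rewrite /S leq_pmull // muln_gt0.
  have lN : l < N by rewrite /N ltnS leq_pmulr.
  have uS : u < S by lia.
  have un : u.+1 < N by lia.
  rewrite P_Fq modn_small //.
  rewrite -[u.+1]add0n -(mul0n N) Fq_mul // /Fkj /= (@modn_small u l); last lia.
  by repeat case: ifP => ?; lia.
have := step t; rewrite -IH.
rewrite big_ltn; last lia.
rewrite addSn big_nat_recr /=; last lia.
lia.
Qed.

End Key.

Theorem mainTheorem3 (l : nat) (hl : 1 <= l) (i : nat) (hi : 1 <= i)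
  (r : nat) (hr : 1 <= r <= i) (t : nat) :
  minn (\sum_(t <= u < t + l) Rinf l i r u) l =
  gfun l ((t %/ (l.+1) ^ (i.+1 - r)) %% (2 * l.+1)).
Proof.
set j := i.+1 - r.
have j0 : 0 < j by rewrite /j; lia.
set c := cc l j.
have c0 : 0 < c := @cc_pos l j hl j0.
have NE : (l * c).+1 = l.+1 ^ j by rewrite -(@cc_spec l j hl) addn1.
have HR : forall u, Rinf l i r u = P l c u.
  move=> u; rewrite /Rinf Rmat_row // size_flatten_nseq nth_flatten_nseq; last first.
    by rewrite ltn_pmod // muln_gt0 expn_gt0 /= size_pword // !muln_gt0.
  rewrite modn_dvdm; last exact: dvdn_mull.
  by rewrite /P size_pword.
rewrite (eq_bigr _ (fun u _ => HR u)) window // /G NE.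
apply/minn_idPl; rewrite /gfun; case: ifP => //; lia.
Qed.
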